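(* Let $R$ be a Noetherian prime duo-ring (equivalently, a Noetherian duo-domain). Then the following are equivalent: (1) $R$ is an FGC-ring; (2) $R$ is a left FGC-ring; (3) $R$ is a principal ideal ring. Moreover, these are also equivalent to: $R$ is a right FGC-ring.
   Context: All rings have identity and modules are unital. ''Noetherian'' means both left and right Noetherian. A duo-ring is a ring in which every one-sided ideal is two-sided. A left (resp. right) FGC-ring is a ring over which every finitely generated left (resp. right) module is a direct sum of cyclic submodules; an FGC-ring is both left and right FGC. A principal ideal ring is a ring in which every left ideal and every right ideal is principal. *)

(* Defs.v *)
From HB Require Import structures.
From mathcomp Require Import all_boot all_order all_algebra.
Set Implicit Arguments. Unset Strict Implicit. Unset Printing Implicit Defensive.
Import GRing.Theory.
Local Open Scope ring_scope.

Section RingDefs.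
Variable R : nzRingType.

Definition left_ideal (I : pred R) : Prop :=
  [/\ 0 \in I, (forall x y, x \in I -> y \in I -> x + y \in I)
    & (forall r x, x \in I -> r * x \in I)].
Definition right_ideal (I : pred R) : Prop :=
  [/\ 0 \in I, (forall x y, x \in I -> y \in I -> x + y \in I)
    & (forall r x, x \in I -> x * r \in I)].

Definition duo_ring : Prop :=
  (forall I, left_ideal I -> right_ideal I) /\
  (forall I, right_ideal I -> left_ideal I).

(* prime ring: aRb = 0 implies a = 0 or b = 0 (R nonzero by nzRingType) *)
Definition prime_ring : Prop :=
  forall a b : R, (forall r : R, a * r * b = 0) -> a = 0 \/ b = 0.

Definition left_noetherian : Prop :=
  forall I : nat -> pred R, (forall n, left_ideal (I n)) ->
    (forall n, {subset I n <= I n.+1}) ->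
    exists N, forall n, (N <= n)%N -> I n =i I N.
Definition right_noetherian : Prop :=
  forall I : nat -> pred R, (forall n, right_ideal (I n)) ->
    (forall n, {subset I n <= I n.+1}) ->
    exists N, forall n, (N <= n)%N -> I n =i I N.
Definition noetherian : Prop := left_noetherian /\ right_noetherian.

Definition principal_ideal_ring : Prop :=
  (forall I, left_ideal I -> exists a : R, forall x, x \in I <-> exists r, x = r * a) /\
  (forall I, right_ideal I -> exists a : R, forall x, x \in I <-> exists r, x = a * r).

Definition fin_generated (M : lmodType R) : Prop :=
  exists s : seq M, forall m : M,
    exists c : 'I_(size s) -> R, m = \sum_(i < size s) c i *: s`_i.

(* M is the (internal) direct sum of the cyclic submodules R x_1, ..., R x_n *)
Definition direct_sum_of_cyclics (M : lmodType R) : Prop :=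
  exists s : seq M,
    (forall m : M, exists c : 'I_(size s) -> R, m = \sum_(i < size s) c i *: s`_i) /\
    (forall c : 'I_(size s) -> R, \sum_(i < size s) c i *: s`_i = 0 ->
       forall i, c i *: s`_i = 0).

Definition left_FGC : Prop :=
  forall M : lmodType R, fin_generated M -> direct_sum_of_cyclics M.
End RingDefs.

(* right R-modules = left modules over the converse ring R^c *)
Definition right_FGC (R : nzRingType) : Prop := left_FGC R^c.
Definition FGC (R : nzRingType) : Prop := left_FGC R /\ right_FGC R.

(* Main.v *)
From HB Require Import structures.
Require Import Defs.
From mathcomp Require Import all_boot all_order all_algebra.
From Stdlib Require Import ClassicalEpsilon Classical.
Set Implicit Arguments. Unset Strict Implicit. Unset Printing Implicit Defensive.
Import GRing.Theory.
Local Open Scope ring_scope.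

Definition pb (P : Prop) : bool := if excluded_middle_informative P then true else false.
Lemma pbP P : reflect P (pb P).
Proof. rewrite /pb; case: excluded_middle_informative => h; by constructor. Qed.

Lemma acc_max (R : nzRingType) (A : Type) (F : A -> pred R) (ok : A -> Prop) (a0 : A) :
  left_noetherian R -> (forall a, ok a -> left_ideal (F a)) -> ok a0 ->
  exists a, ok a /\ forall b, ok b -> {subset F a <= F b} -> {subset F b <= F a}.
Proof.
move=> hN hI h0.
apply: NNPP => hne.
have step : forall a, ok a -> exists b, ok b /\ {subset F a <= F b} /\ ~ {subset F b <= F a}.
  move=> a oka; apply: NNPP => hn; apply: hne; exists a; split=> // b okb sab.
  apply: NNPP => hb; apply: hn; exists b; split=> //.
pose P a b := ok b /\ {subset F a <= F b} /\ ~ {subset F b <= F a}.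
pose nx a := epsilon (inhabits a0) (P a).
have nxP : forall a, ok a -> P a (nx a).
  by move=> a oka; apply: epsilon_spec; apply: step.
pose s k := iter k nx a0.
have sok : forall k, ok (s k).
  by elim=> [|k IH] //=; case: (nxP _ IH).
have [N HN] := hN (fun k => F (s k)) (fun k => hI _ (sok k))
   (fun k => proj1 (proj2 (nxP _ (sok k)))).
case: (proj2 (proj2 (nxP _ (sok N)))) => x hx.
by move: (HN N.+1 (leqnSn N) x); rewrite hx.
Qed.
Section Span.
Variable R : nzRingType.
Variable M : lmodType R.
Definition lcf (c : nat -> R) (u : seq M) : M := \sum_(i < size u) c i *: u`_i.
Definition inspan (u : seq M) (m : M) := exists c, m = lcf c u.

Lemma lcf_nil c : lcf c [::] = 0.
Proof. by rewrite /lcf big_ord0. Qed.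

Lemma lcf_cons c x u : lcf c (x :: u) = c 0%N *: x + lcf (fun i => c i.+1) u.
Proof.
by rewrite /lcf /= big_ord_recl /=.
Qed.

Lemma lcf_ext c d u : (forall i, (i < size u)%N -> c i = d i) -> lcf c u = lcf d u.
Proof. by move=> h; apply: eq_bigr => i _; rewrite h. Qed.

Lemma scale_lcf a c u : a *: lcf c u = lcf (fun i => a * c i) u.
Proof. by rewrite /lcf scaler_sumr; apply: eq_bigr => i _; rewrite scalerA. Qed.

Lemma lcfD c d u : lcf c u + lcf d u = lcf (fun i => c i + d i) u.
Proof. by rewrite /lcf -big_split; apply: eq_bigr => i _; rewrite scalerDl. Qed.

Lemma lcf0 u : lcf (fun _ => 0) u = 0.
Proof. by rewrite /lcf big1 // => i _; rewrite scale0r. Qed.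

Lemma inspan0 u : inspan u 0.
Proof. by exists (fun _ => 0); rewrite lcf0. Qed.

Lemma inspanD u m1 m2 : inspan u m1 -> inspan u m2 -> inspan u (m1 + m2).
Proof. by move=> [c ->] [d ->]; exists (fun i => c i + d i); rewrite lcfD. Qed.

Lemma inspanZ u a m : inspan u m -> inspan u (a *: m).
Proof. by move=> [c ->]; exists (fun i => a * c i); rewrite scale_lcf. Qed.

Lemma inspanN u m : inspan u m -> inspan u (- m).
Proof. by move=> h; rewrite -scaleN1r; apply: inspanZ. Qed.

Lemma inspanB u m1 m2 : inspan u m1 -> inspan u m2 -> inspan u (m1 - m2).
Proof. by move=> h1 h2; apply: inspanD => //; apply: inspanN. Qed.

Lemma lcf_single u k a : (k < size u)%N ->
  lcf (fun j => if j == k then a else 0) u = a *: u`_k.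
Proof.
elim: u k => [|x u IH] [|k] //= hk; rewrite lcf_cons /=.
  by rewrite lcf0 addr0.
by rewrite scale0r add0r IH.
Qed.

Lemma inspan_nth u k : (k < size u)%N -> inspan u u`_k.
Proof.
by move=> hk; exists (fun j => if j == k then 1 else 0); rewrite lcf_single // scale1r.
Qed.

Lemma inspan_cons x u m : inspan u m -> inspan (x :: u) m.
Proof.
move=> [c ->]; exists (fun j => if j is j'.+1 then c j' else 0).
by rewrite lcf_cons scale0r add0r.
Qed.

Lemma inspan_head x u : inspan (x :: u) x.
Proof. exact: (@inspan_nth (x :: u) 0). Qed.

Lemma inspan_lc s t : (forall i, (i < size t)%N -> inspan s t`_i) ->
  forall c, inspan s (lcf c t).
Proof.
elim: t => [|x t IH] h c; first by rewrite lcf_nil; apply: inspan0.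
rewrite lcf_cons; apply: inspanD; first by apply: inspanZ; apply: (h 0%N).
by apply: IH => i hi; apply: (h i.+1).
Qed.

Lemma inspan_sub s t : (forall i, (i < size t)%N -> inspan s t`_i) ->
  forall m, inspan t m -> inspan s m.
Proof. by move=> h m [c ->]; apply: inspan_lc. Qed.

Lemma inspan_consP x u m :
  inspan (x :: u) m <-> exists a m', inspan u m' /\ m = a *: x + m'.
Proof.
split.
  by move=> [c ->]; rewrite lcf_cons; exists (c 0%N), (lcf (fun i => c i.+1) u);
    split=> //; exists (fun i => c i.+1).
move=> [a [m' [[c ->] ->]]]; exists (fun j => if j is j'.+1 then c j' else a).
by rewrite lcf_cons.
Qed.

Lemma lcf_set c u i x : (i < size u)%N ->
  lcf c (set_nth 0 u i x) = lcf c u - c i *: u`_i + c i *: x.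
Proof.
elim: u i c => [|y u IH] [|i] c //= hi; rewrite !lcf_cons.
  by rewrite /= (addrC (c 0%N *: y)) addrK addrC.
by rewrite IH // !addrA.
Qed.

End Span.
Lemma H1 (V : zmodType) (a b y : V) : a - b + ((y - a) + b) = y.
Proof. by rewrite addrCA addrNK addrNK. Qed.
Lemma H2 (V : zmodType) (a b c : V) : a + (c - b) - (a - b) = c.
Proof. by rewrite opprB -addrA (addrA (c - b)) addrNK addrC addrNK. Qed.

Section Struct.
Variable R : nzRingType.
Hypothesis hdom : forall a b : R, a * b = 0 -> a = 0 \/ b = 0.
Hypothesis hPIR : forall I : pred R, left_ideal I ->
  exists g, forall x, x \in I <-> exists r, x = r * g.
Hypothesis hdL : forall a x : R, exists y, x * a = a * y.
Hypothesis hACC : left_noetherian R.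

Lemma kernel (v w : R) : v != 0 \/ w != 0 ->
  exists m n, m * v = n * w /\
    forall x1 x2, x1 * v = x2 * w -> exists r, x1 = r * m /\ x2 = r * n.
Proof.
move=> hvw.
case: (eqVneq w 0) => [w0|wn0].
  have vn0 : v != 0 by case: hvw => //; rewrite w0 eqxx.
  exists 0, 1; split; first by rewrite w0 !mul0r mulr0.
  move=> x1 x2; rewrite w0 mulr0 => h; exists x2; split; last by rewrite mulr1.
  case: (hdom h) => [->|]; first by rewrite mulr0.
  by move/eqP: vn0.
pose X := [pred x | pb (exists x2, x * v = x2 * w)].
have hX : left_ideal X.
  split.
  - by apply/pbP; exists 0; rewrite !mul0r.
  - move=> x y /pbP [x2 h1] /pbP [y2 h2]; apply/pbP; exists (x2 + y2).
    by rewrite !mulrDl h1 h2.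
  - by move=> r x /pbP [x2 h]; apply/pbP; exists (r * x2); rewrite -!mulrA h.
have [m Hm] := hPIR hX.
have : m \in X by apply/Hm; exists 1; rewrite mul1r.
move=> /pbP [n hmn]; exists m, n; split=> // x1 x2 h.
have : x1 \in X by apply/pbP; exists x2.
move=> /Hm [r hr]; exists r; split=> //.
have : (r * n - x2) * w = 0 by rewrite mulrBl -mulrA -hmn mulrA -hr h subrr.
case/hdom => [/eqP|/eqP]; first by rewrite subr_eq0 => /eqP ->.
by rewrite (negPf wn0).
Qed.


Variable M : lmodType R.
Definition indepf (t : seq M) :=
  forall c, lcf c t = 0 -> forall i, (i < size t)%N -> c i *: t`_i = 0.
Definition speq (s t : seq M) := forall m, inspan s m <-> inspan t m.

Lemma speq_cons x s t : speq s t -> speq (x :: s) (x :: t).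
Proof.
move=> h m; rewrite !inspan_consP.
by split=> [[a [m' [hm ->]]]|[a [m' [hm ->]]]]; exists a, m'; split=> //; apply/h.
Qed.

Lemma speq_gen s t : (forall i, (i < size t)%N -> inspan s t`_i) ->
  (forall i, (i < size s)%N -> inspan t s`_i) -> speq s t.
Proof. by move=> h1 h2 m; split; apply: inspan_sub. Qed.

Lemma decomp n : forall s : seq M, size s = n -> exists t, speq s t /\ indepf t.
Proof.
elim: n => [|n IH] s.
  by move=> /size0nil ->; exists [::]; split.
case: s => [|x s'] //= [hs'].
pose ok (p : M * seq M) := size p.2 = n /\ speq (x :: s') (p.1 :: p.2).
pose J (p : M * seq M) := [pred r : R | pb (inspan p.2 (r *: p.1))].
have hJ : forall p, left_ideal (J p).
  move=> p; split.
  - by apply/pbP; rewrite scale0r; exact: inspan0.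
  - by move=> a b /pbP ha /pbP hb; apply/pbP; rewrite scalerDl; exact: inspanD.
  - by move=> r a /pbP ha; apply/pbP; rewrite -scalerA; exact: inspanZ.
have ok0 : ok (x, s') by split.
have [[y u] [[/= hu hsp] hmax]] := acc_max hACC (fun p _ => hJ p) ok0.
have [g Hg] := hPIR (hJ (y, u)).
have : g \in J (y, u) by apply/Hg; exists 1; rewrite mul1r.
move=> /pbP [d /= hd].
have claim : forall i, (i < size u)%N -> exists f, d i = g * f.
  move=> i hi.
  pose K := [pred z : R | pb (exists r1 r2, z = r1 * g + r2 * d i)].
  have hK : left_ideal K.
    split.
    - by apply/pbP; exists 0, 0; rewrite !mul0r addr0.
    - move=> a b /pbP [a1 [a2 ->]] /pbP [b1 [b2 ->]]; apply/pbP.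
      exists (a1 + b1), (a2 + b2); rewrite !mulrDl.
      by rewrite -!addrA; congr (_ + _); rewrite addrCA.
    - move=> r a /pbP [a1 [a2 ->]]; apply/pbP; exists (r * a1), (r * a2).
      by rewrite mulrDr !mulrA.
  have [h Hh] := hPIR hK.
  have : h \in K by apply/Hh; exists 1; rewrite mul1r.
  move=> /pbP [r1 [r2 hh]].
  have : g \in K by apply/pbP; exists 1, 0; rewrite mul1r mul0r addr0.
  move=> /Hh [a1 ha1].
  have : d i \in K by apply/pbP; exists 0, 1; rewrite mul1r mul0r add0r.
  move=> /Hh [a2 ha2].
  suff hJh : h \in J (y, u).
    move: hJh => /Hg [b hb].
    have [f hf] := hdL g (a2 * b).
    by exists f; rewrite ha2 hb mulrA.
  case: (eqVneq h 0) => [h0|hn0].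
    by rewrite h0; apply/pbP; rewrite /= scale0r; exact: inspan0.
  have [p hp] := hdL h a1.
  have [q hq] := hdL h a2.
  have [v hv] := hdL g r1.
  have [w hw] := hdL (d i) r2.
  have hpq : p * v + q * w = 1.
    have : h * (p * v + q * w - 1) = 0.
      by rewrite mulrBr mulr1 mulrDr !mulrA -hp -hq -ha1 -ha2 -hv -hw -hh subrr.
    case/hdom => [h0|/eqP]; first by move/eqP: hn0.
    by rewrite subr_eq0 => /eqP.
  have hvw : v != 0 \/ w != 0.
    case: (eqVneq v 0) => [v0|]; last by left.
    case: (eqVneq w 0) => [w0|]; last by right.
    by move: hpq; rewrite v0 w0 !mulr0 addr0 => /esym/eqP; rewrite oner_eq0.
  have [m' [n' [hmn hker]]] := kernel hvw.
  pose z := p *: y - q *: u`_i.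
  pose w' := m' *: y + n' *: u`_i.
  pose u' := set_nth 0 u i w'.
  have hsu' : size u' = size u by rewrite size_set_nth; apply/maxn_idPr.
  have hqw : q * w = 1 - p * v by rewrite -hpq (addrC (p * v)) addrK.
  have hpv : p * v = 1 - q * w by rewrite -hpq addrK.
  have [r1' [e11 e12]] := hker (1 - v * p) (v * q)
    ltac:(by rewrite mulrBl mul1r -!mulrA hqw mulrBr mulr1).
  have [r2' [e21 e22]] := hker (w * p) (1 - w * q)
    ltac:(by rewrite mulrBl mul1r -!mulrA hpv mulrBr mulr1).
  have hu'i : u'`_i = w' by rewrite nth_set_nth /= eqxx.
  have hu'j : forall j, j != i -> u'`_j = u`_j.
    by move=> j hj; rewrite nth_set_nth /= (negPf hj).
  have ey : y = v *: z + r1' *: w'.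
    rewrite /z /w' scalerBr scalerDr !scalerA -e11 -e12 scalerBl scale1r.
    by rewrite H1.
  have eu : u`_i = r2' *: w' - w *: z.
    rewrite /z /w' scalerBr scalerDr !scalerA -e21 -e22 scalerBl scale1r.
    by rewrite H2.
  have hzsp : speq (y :: u) (z :: u').
    apply: speq_gen => [] [|j] /= hj.
    - by apply: inspanB; apply: inspanZ;
        [exact: inspan_head | apply: inspan_cons; apply: inspan_nth].
    - rewrite hsu' in hj; case: (eqVneq j i) => [->|hji]; last first.
        by rewrite hu'j //; apply: inspan_cons; apply: inspan_nth.
      by rewrite hu'i; apply: inspanD; apply: inspanZ;
        [exact: inspan_head | apply: inspan_cons; apply: inspan_nth].
    - rewrite ey; apply: inspanD; apply: inspanZ; first exact: inspan_head.
      by rewrite -hu'i; apply: inspan_cons; apply: inspan_nth; rewrite hsu'.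
    - case: (eqVneq j i) => [->|hji]; last first.
        by rewrite -hu'j //; apply: inspan_cons; apply: inspan_nth; rewrite hsu'.
      rewrite eu; apply: inspanB; apply: inspanZ; last exact: inspan_head.
      by rewrite -hu'i; apply: inspan_cons; apply: inspan_nth; rewrite hsu'.
  have okz : ok (z, u').
    split; first by rewrite /= hsu'.
    by move=> m; rewrite hsp; exact: hzsp.
  have hJz : h \in J (z, u').
    apply/pbP => /=.
    have -> : h *: z = lcf d u' - d i *: w'.
      rewrite lcf_set // -hd addrK /z scalerBr !scalerA -hp -hq -ha1 -ha2.
      by rewrite hd.
    by apply: inspanB; [exists d | apply: inspanZ; rewrite -hu'i; apply: inspan_nth; rewrite hsu'].
  apply: (hmax (z, u') okz) => //.
  move=> r /Hg [r0 ->]; rewrite ha1 mulrA.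
  by case: (hJ (z, u')) => _ _; apply.
have claim' : forall i, exists f, (i < size u)%N -> d i = g * f.
  move=> i; case: (ltnP i (size u)) => hi; last by exists 0.
  by have [f hf] := claim i hi; exists f.
pose f i := proj1_sig (constructive_indefinite_description _ (claim' i)).
have hf : forall i, (i < size u)%N -> d i = g * f i.
  by move=> i; exact: (proj2_sig (constructive_indefinite_description _ (claim' i))).
pose y' := y - lcf f u.
have gy' : g *: y' = 0.
  rewrite /y' scalerBr hd scale_lcf (lcf_ext (d := fun i => g * f i)) ?subrr //.
have [t' [ht' hit']] := IH u hu.
have hsp' : speq (y :: u) (y' :: u).
  apply: speq_gen => [] [|i] /= hi.
  - by apply: inspanB; [exact: inspan_head | apply: inspan_cons; exists f].
  - by apply: inspan_cons; apply: inspan_nth.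
  - have -> : y = y' + lcf f u by rewrite /y' subrK.
    by apply: inspanD; [exact: inspan_head | apply: inspan_cons; exists f].
  - by apply: inspan_cons; apply: inspan_nth.
exists (y' :: t'); split.
  move=> m; rewrite hsp hsp'; exact: speq_cons.
move=> c; rewrite lcf_cons => h0.
have key : c 0%N *: y' = 0.
  have hin : inspan u (c 0%N *: y).
    have -> : c 0%N *: y = c 0%N *: y' + c 0%N *: lcf f u.
      by rewrite -scalerDr /y' subrK.
    apply: inspanD; last by apply: inspanZ; exists f.
    have -> : c 0%N *: y' = - lcf (fun i => c i.+1) t'.
      by apply/eqP; rewrite -addr_eq0 h0.
    by apply: inspanN; apply/ht'; exists (fun i => c i.+1).
  have : c 0%N \in J (y, u) by apply/pbP.
  by move=> /Hg [r ->]; rewrite -scalerA gy' scaler0.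
move=> [|i] hi //=.
apply: (hit' (fun i => c i.+1)) => //.
by rewrite key add0r in h0.
Qed.

End Struct.

Section Cyc.
Variable R : nzRingType.
Variable M : lmodType R.
Hypothesis P : forall x y : M, x != 0 -> y != 0 ->
  exists r1 r2, r1 *: x = r2 *: y /\ r1 *: x != 0.

Lemma indep_cyclic (t : seq M) : indepf t ->
  exists z, forall k, (k < size t)%N -> inspan [:: z] t`_k.
Proof.
elim: t => [|x t IH] hit; first by exists 0.
have hit' : indepf t.
  move=> c hc k hk.
  have := hit (fun j => if j is j'.+1 then c j' else 0) _ k.+1 hk.
  by apply; rewrite lcf_cons scale0r add0r.
have [z' hz'] := IH hit'.
case: (eqVneq x 0) => [x0|xn0].
  exists z' => [] [|k] hk /=; last exact: hz'.
  by rewrite x0; exact: inspan0.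
case: (classic (exists k, (k < size t)%N /\ t`_k != 0)) => [[k [hk tk]]|hno].
  have [r1 [r2 [e ne]]] := P xn0 tk.
  exfalso; move/eqP: ne; apply.
  have := hit (fun j => if j is j'.+1 then (if j' == k then - r2 else 0) else r1) _ 0%N.
  apply => //; rewrite lcf_cons /=.
  by rewrite (lcf_single _ hk) e scaleNr subrr.
exists x => [] [|k] hk /=; first exact: inspan_head.
case: (eqVneq t`_k 0) => [->|tk]; first exact: inspan0.
by exfalso; apply: hno; exists k.
Qed.
End Cyc.

Definition ext (R : nzRingType) n (c : 'I_n -> R) : nat -> R :=
  fun k => if @insub _ _ 'I_n k is Some i then c i else 0.
Lemma extE (R : nzRingType) n (c : 'I_n -> R) (i : 'I_n) : ext c i = c i.
Proof. by rewrite /ext valK. Qed.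

Lemma pir_fgc (R : nzRingType) :
  (forall a b : R, a * b = 0 -> a = 0 \/ b = 0) ->
  (forall I : pred R, left_ideal I -> exists g, forall x, x \in I <-> exists r, x = r * g) ->
  (forall a x : R, exists y, x * a = a * y) ->
  left_noetherian R -> left_FGC R.
Proof.
move=> hdom hPIR hdL hACC M [s hs].
have [t [hst hit]] := decomp hdom hPIR hdL hACC (erefl (size s)).
exists t; split.
  move=> m.
  have : inspan s m.
    have [c ->] := hs m; exists (ext c).
    by apply: eq_bigr => i _; rewrite extE.
  move=> /hst [cf ->]; by exists (fun i => cf i).
move=> c hc i.
rewrite -extE; apply: (hit (ext c)) => //.
by rewrite -hc; apply: eq_bigr => j _; rewrite extE.
Qed.

Section IM.
Variable R : nzRingType.
Hypothesis hdom : forall a b : R, a * b = 0 -> a = 0 \/ b = 0.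
Hypothesis hdR : forall a x : R, exists y, a * x = y * a.
Hypothesis hFGC : left_FGC R.
Variables a b : R.
Definition I2 := [pred x : R | pb (exists r1 r2, x = r1 * a + r2 * b)].
Lemma hI0 : 0 \in I2. Proof. by apply/pbP; exists 0, 0; rewrite !mul0r addr0. Qed.
Lemma hID x y : x \in I2 -> y \in I2 -> x + y \in I2.
Proof.
move=> /pbP [a1 [a2 ->]] /pbP [b1 [b2 ->]]; apply/pbP.
exists (a1 + b1), (a2 + b2); rewrite !mulrDl.
by rewrite -!addrA; congr (_ + _); rewrite addrCA.
Qed.
Lemma hIM r x : x \in I2 -> r * x \in I2.
Proof.
by move=> /pbP [a1 [a2 ->]]; apply/pbP; exists (r * a1), (r * a2); rewrite mulrDr !mulrA.
Qed.
Definition imod := {x : R | x \in I2}.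
HB.instance Definition _ := [Choice of imod by <:].
Definition izero : imod := exist _ 0 hI0.
Definition iadd (x y : imod) : imod := exist _ (val x + val y) (hID (valP x) (valP y)).
Definition iscale (r : R) (x : imod) : imod := exist _ (r * val x) (hIM r (valP x)).
Lemma hIN x : x \in I2 -> - x \in I2.
Proof. by move=> h; rewrite -mulN1r; apply: hIM. Qed.
Definition iopp (x : imod) : imod := exist _ (- val x) (hIN (valP x)).
Lemma iaddA : associative iadd. Proof. by move=> x y z; apply: val_inj; rewrite /= addrA. Qed.
Lemma iaddC : commutative iadd. Proof. by move=> x y; apply: val_inj; rewrite /= addrC. Qed.
Lemma iadd0 : left_id izero iadd. Proof. by move=> x; apply: val_inj; rewrite /= add0r. Qed.
Lemma iaddN : left_inverse izero iopp iadd. Proof. by move=> x; apply: val_inj; rewrite /= addNr. Qed.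
HB.instance Definition _ := GRing.isZmodule.Build imod iaddA iaddC iadd0 iaddN.
Lemma iscaleA a' b' v : iscale a' (iscale b' v) = iscale (a' * b') v.
Proof. by apply: val_inj; rewrite /= mulrA. Qed.
Lemma iscale1 : left_id 1 iscale. Proof. by move=> x; apply: val_inj; rewrite /= mul1r. Qed.
Lemma iscaleDr : right_distributive iscale +%R.
Proof. by move=> a' x y; apply: val_inj; rewrite /= mulrDr. Qed.
Lemma iscaleDl v : {morph iscale^~ v: a' b' / a' + b'}.
Proof. by move=> a' b'; apply: val_inj; rewrite /= mulrDl. Qed.
HB.instance Definition _ := GRing.Zmodule_isLmodule.Build R imod iscaleA iscale1 iscaleDr iscaleDl.
Lemma val_scale (r : R) (x : imod) : val (r *: x) = r * val x. Proof. by []. Qed.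
Lemma val_add (x y : imod) : val (x + y) = val x + val y. Proof. by []. Qed.
Lemma val_zero : val (0 : imod) = 0. Proof. by []. Qed.
Lemma imod_eq0 (x : imod) : (x == 0) = (val x == 0).
Proof. by apply/eqP/eqP => [->|h] //; apply: val_inj. Qed.

Lemma I2_principal : exists c, forall x, x \in I2 <-> exists r, x = r * c.
Proof.
have aI : a \in I2 by apply/pbP; exists 1, 0; rewrite mul1r mul0r addr0.
have bI : b \in I2 by apply/pbP; exists 0, 1; rewrite mul1r mul0r add0r.
pose s : seq imod := [:: exist _ a aI; exist _ b bI].
have fg : fin_generated imod.
  exists s => m.
  have := valP m; move=> /pbP [r1 [r2 hm]].
  exists (fun i => if val i == 0%N then r1 else r2).
  rewrite !big_ord_recl big_ord0 /=; apply: val_inj.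
  by rewrite /= hm addr0.
have [t [hsp hit]] := hFGC fg.
have hit' : indepf t.
  move=> c hc i hi.
  have := hit (fun j => c j) _ (Ordinal hi); apply => //.
have hP : forall x y : imod, x != 0 -> y != 0 ->
    exists r1 r2, r1 *: x = r2 *: y /\ r1 *: x != 0.
  move=> x y; rewrite !imod_eq0 => hx hy.
  have [y1 hy1] := hdR (val x) (val y).
  exists y1, (val x); split.
    by apply: val_inj; rewrite !val_scale -hy1.
  rewrite imod_eq0 val_scale -hy1; apply/eqP => /hdom [] /eqP.
    by rewrite (negPf hx).
  by rewrite (negPf hy).
have [z hz] := indep_cyclic hP hit'.
exists (val z) => x; split.
  move=> xI.
  have : inspan t (exist _ x xI : imod).
    have [c hc] := hsp (exist _ x xI).
    by exists (ext c); rewrite hc; apply: eq_bigr => i _; rewrite extE.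
  move=> /(inspan_sub hz) [c]; rewrite lcf_cons lcf_nil addr0 => /(congr1 val) /= ->.
  by exists (c 0%N).
by move=> [r ->]; apply: hIM; exact: valP.
Qed.
End IM.

Definition leftPIR (R : nzRingType) :=
  forall I : pred R, left_ideal I -> exists g, forall x, x \in I <-> exists r, x = r * g.

Lemma fgc_pir (R : nzRingType) :
  (forall a b : R, a * b = 0 -> a = 0 \/ b = 0) ->
  (forall a x : R, exists y, a * x = y * a) ->
  left_noetherian R -> left_FGC R -> leftPIR R.
Proof.
move=> hdom hdR hACC hFGC I hI.
pose F (a : R) := [pred x : R | pb (exists r, x = r * a)].
have hF : forall a, a \in I -> left_ideal (F a).
  move=> a _; split.
  - by apply/pbP; exists 0; rewrite mul0r.
  - by move=> x y /pbP [r1 ->] /pbP [r2 ->]; apply/pbP; exists (r1 + r2); rewrite mulrDl.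
  - by move=> r x /pbP [r1 ->]; apply/pbP; exists (r * r1); rewrite mulrA.
have [hI0 hID hIM] := hI.
have [a [aI hmax]] := acc_max hACC hF hI0.
exists a => x; split; last by move=> [r ->]; apply: hIM.
move=> xI.
have [c Hc] := I2_principal hdom hdR hFGC a x.
have cI : c \in I.
  have : c \in I2 a x by apply/Hc; exists 1; rewrite mul1r.
  by move=> /pbP [r1 [r2 ->]]; apply: hID; apply: hIM.
have sub : {subset F a <= F c}.
  move=> y /pbP [r ->].
  have : a \in I2 a x by apply/pbP; exists 1, 0; rewrite mul1r mul0r addr0.
  by move=> /Hc [r' ->]; apply/pbP; exists (r * r'); rewrite mulrA.
have : x \in F c.
  have : x \in I2 a x by apply/pbP; exists 0, 1; rewrite mul1r mul0r add0r.
  by move=> /Hc [r' ->]; apply/pbP; exists r'.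
by move=> /(hmax c cI sub) /pbP.
Qed.

Lemma main_left (R : nzRingType) :
  (forall a b : R, a * b = 0 -> a = 0 \/ b = 0) ->
  (forall a x : R, exists y, x * a = a * y) ->
  (forall a x : R, exists y, a * x = y * a) ->
  left_noetherian R -> (left_FGC R <-> leftPIR R).
Proof.
move=> hdom hdL hdR hACC; split; first exact: fgc_pir.
by move=> h; apply: pir_fgc.
Qed.

Theorem proposition3p5 (R : nzRingType) :
  noetherian R -> prime_ring R -> duo_ring R ->
  (FGC R <-> left_FGC R) /\ (left_FGC R <-> principal_ideal_ring R) /\
  (principal_ideal_ring R <-> right_FGC R).
Proof.
move=> [hL hRn] hpr [duoL duoR].
have hdL : forall a x : R, exists y, x * a = a * y.
  move=> a x.
  pose aR := [pred z : R | pb (exists r, z = a * r)].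
  have hr : right_ideal aR.
    split.
    - by apply/pbP; exists 0; rewrite mulr0.
    - by move=> u v /pbP [r1 ->] /pbP [r2 ->]; apply/pbP; exists (r1 + r2); rewrite mulrDr.
    - by move=> r u /pbP [r1 ->]; apply/pbP; exists (r1 * r); rewrite mulrA.
  have [_ _ hm] := duoR _ hr.
  have : x * a \in aR by apply: hm; apply/pbP; exists 1; rewrite mulr1.
  by move=> /pbP.
have hdR : forall a x : R, exists y, a * x = y * a.
  move=> a x.
  pose Ra := [pred z : R | pb (exists r, z = r * a)].
  have hl : left_ideal Ra.
    split.
    - by apply/pbP; exists 0; rewrite mul0r.
    - by move=> u v /pbP [r1 ->] /pbP [r2 ->]; apply/pbP; exists (r1 + r2); rewrite mulrDl.
    - by move=> r u /pbP [r1 ->]; apply/pbP; exists (r * r1); rewrite mulrA.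
  have [_ _ hm] := duoL _ hl.
  have : a * x \in Ra by apply: hm; apply/pbP; exists 1; rewrite mul1r.
  by move=> /pbP.
have hdom : forall a b : R, a * b = 0 -> a = 0 \/ b = 0.
  move=> a b hab; apply: hpr => r.
  have [y hy] := hdL b r.
  by rewrite -mulrA hy mulrA hab mul0r.
have hdomc : forall a b : R^c, a * b = 0 -> a = 0 \/ b = 0.
  by move=> a b /hdom [] ->; [right | left].
have hdLc : forall a x : R^c, exists y, x * a = a * y.
  move=> a x; have [y hy] := hdR a x; by exists y.
have hdRc : forall a x : R^c, exists y, a * x = y * a.
  move=> a x; have [y hy] := hdL a x; by exists y.
have hLc : left_noetherian R^c := hRn.
have eqL := main_left hdom hdL hdR hL.
have eqR : right_FGC R <-> leftPIR R^c := main_left hdomc hdLc hdRc hLc.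
have LtoR : leftPIR R -> leftPIR R^c.
  move=> h I hI.
  have [g Hg] := h I (duoR I hI).
  exists g => x; rewrite Hg; split.
    by move=> [r ->]; have [y hy] := hdL g r; exists y; rewrite hy.
  by move=> [r ->]; have [y hy] := hdR g r; exists y.
have RtoL : leftPIR R^c -> leftPIR R.
  move=> h I hI.
  have [g Hg] := h I (duoL I hI).
  exists g => x; rewrite Hg; split.
    by move=> [r ->]; have [y hy] := hdR g r; exists y.
  by move=> [r ->]; have [y hy] := hdL g r; exists y; rewrite hy.
have PIReq : principal_ideal_ring R <-> leftPIR R.
  split; first by case.
  by move=> h; split => //; apply: LtoR.
split; last split.
- split; first by case.
  by move=> h; split => //; apply/eqR/LtoR/eqL.
- by rewrite PIReq.
- by rewrite PIReq eqR; split; [apply: LtoR | apply: RtoL].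
Qed.
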